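(* Let $C=(c_{ij})_{1\le i,j\le 6}$ be the Cartan matrix of type $E_6$: $c_{ii}=2$, $c_{ij}=c_{ji}=-1$ for $\{i,j\} \in \{\{1,3\},\{3,4\},\{4,5\},\{5,6\},\{2,4\}\}$, and $c_{ij}=0$ otherwise. Let $e_1,\dots,e_6$ be the standard basis of $\mathbb{Z}^6$, define $s_i \in \mathrm{GL}_6(\mathbb{Z})$ by $s_i(e_j) = e_j - c_{ji} e_i$, let $w = s_1 s_3 s_5 s_6$ and for a prime power $q$ let $T(q) = \mathbb{Z}^6/(q w - \mathrm{id})\mathbb{Z}^6$. Put $N = (q-1)(q^2+q+1) = q^3-1$. Then: if $q \equiv 0$ or $2 \pmod 3$, $T(q) \cong \mathbb{Z}/N \times \mathbb{Z}/N$; if $q \equiv 1 \pmod 3$, $T(q) \cong \mathbb{Z}/3 \times \mathbb{Z}/(N/3) \times \mathbb{Z}/N$ (these being the elementary divisors). In all cases $T(q) \cong \mathbb{Z}/(q-1) \times \mathbb{Z}/(q^2+q+1) \times \mathbb{Z}/N$. *)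

(* Defs.v *)
From HB Require Import structures.
From mathcomp Require Import all_boot all_order all_algebra.
Set Implicit Arguments. Unset Strict Implicit. Unset Printing Implicit Defensive.
Import Order.TTheory GRing.Theory Num.Theory.
Local Open Scope ring_scope.

(* Adjacency of the E6 Dynkin diagram, 0-based indices (paper index i <-> i-1):
   edges {1,3},{3,4},{4,5},{5,6},{2,4} become {0,2},{2,3},{3,4},{4,5},{1,3}. *)
Definition e6_edge (i j : nat) : bool :=
  [|| (i == 0%N) && (j == 2%N), (i == 2%N) && (j == 3%N), (i == 3%N) && (j == 4%N),
      (i == 4%N) && (j == 5%N) | (i == 1%N) && (j == 3%N)].

Definition cartanE6 : 'M[int]_6 :=
  \matrix_(i < 6, j < 6)
    (if i == j then 2 else if e6_edge i j || e6_edge j i then -1 else 0).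

(* Simple reflection s_i, acting on column vectors: s_i(e_j) = e_j - c_{ji} e_i,
   i.e. column j of s_i is e_j - c_{ji} e_i. *)
Definition simple_refl (i : 'I_6) : 'M[int]_6 :=
  \matrix_(k < 6, j < 6) ((k == j)%:R - cartanE6 j i * (k == i)%:R).

(* w = s_1 s_3 s_5 s_6 (paper indices), i.e. s_0 s_2 s_4 s_5 in 0-based indices. *)
Definition wE6 : 'M[int]_6 :=
  simple_refl (inord 0) *m simple_refl (inord 2) *m simple_refl (inord 4)
  *m simple_refl (inord 5).

Definition qw_minus_id (q : nat) : 'M[int]_6 := (q%:Z) *: wE6 - 1%:M.

(* [coker_iso M d] : the abelian group Z^n / M Z^n is isomorphic to
   Z/d_0 x ... x Z/d_(m-1): there is a group homomorphism Z^n -> (+)_k Z/d_k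
   (an integer matrix F followed by reduction mod d_k) which is surjective and
   whose kernel is exactly the lattice M Z^n. *)
Definition coker_iso (n : nat) (M : 'M[int]_n) (d : seq nat) : Prop :=
  exists F : 'M[int]_(size d, n),
    (forall y : 'cV[int]_(size d), exists x : 'cV[int]_n,
        forall k : 'I_(size d), ((F *m x) k ord0 == y k ord0 %[mod (nth 0%N d k)%:Z])%Z) /\
    (forall x : 'cV[int]_n,
        (forall k : 'I_(size d), ((nth 0%N d k)%:Z %| (F *m x) k ord0)%Z) <->
        exists z : 'cV[int]_n, x = M *m z).

Definition prime_power (q : nat) : Prop :=
  exists p k : nat, [/\ prime p, (0 < k)%N & q = (p ^ k)%N].

(* Main.v *)
Require Import Defs.
From HB Require Import structures.
From mathcomp Require Import all_boot all_order all_algebra.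
From mathcomp Require Import ring.
Set Implicit Arguments. Unset Strict Implicit. Unset Printing Implicit Defensive.
Import Order.TTheory GRing.Theory Num.Theory.
Local Open Scope ring_scope.

Notation o0 := (@Ordinal 6 0 isT).
Notation o1 := (@Ordinal 6 1 isT).
Notation o2 := (@Ordinal 6 2 isT).
Notation o3 := (@Ordinal 6 3 isT).
Notation o4 := (@Ordinal 6 4 isT).
Notation o5 := (@Ordinal 6 5 isT).

Lemma sum6 (f : 'I_6 -> int) : \sum_(j < 6) f j = f o0 + f o1 + f o2 + f o3 + f o4 + f o5.
Proof.
rewrite !big_ord_recr big_ord0 /= add0r.
by do 6? congr (_ + _); congr f; apply: val_inj.
Qed.

Lemma ord6_ind (P : 'I_6 -> Prop) : P o0 -> P o1 -> P o2 -> P o3 -> P o4 -> P o5 -> forall k, P k.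
Proof.
move=> h0 h1 h2 h3 h4 h5 [[|[|[|[|[|[|k]]]]]] p] //;
  by rewrite (bool_irrelevance p isT).
Qed.

Lemma inordE (i : nat) (p : (i < 6)%N) : (inord i : 'I_6) = Ordinal p.
Proof. by apply: val_inj; rewrite /= inordK. Qed.

Lemma sact0 (v : 'cV[int]_6) k : (simple_refl (inord 0) *m v) k ord0 =
  if val k == 0%N then - v o0 ord0 + v o2 ord0 else v k ord0.
Proof.
rewrite (inordE (isT : (0 < 6)%N)) mxE sum6 !mxE.
move: k; apply: ord6_ind => /=; rewrite ?mxE /=; ring.
Qed.

Lemma sact2 (v : 'cV[int]_6) k : (simple_refl (inord 2) *m v) k ord0 =
  if val k == 2%N then v o0 ord0 - v o2 ord0 + v o3 ord0 else v k ord0.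
Proof.
rewrite (inordE (isT : (2 < 6)%N)) mxE sum6 !mxE.
move: k; apply: ord6_ind => /=; rewrite ?mxE /=; ring.
Qed.

Lemma sact4 (v : 'cV[int]_6) k : (simple_refl (inord 4) *m v) k ord0 =
  if val k == 4%N then v o3 ord0 - v o4 ord0 + v o5 ord0 else v k ord0.
Proof.
rewrite (inordE (isT : (4 < 6)%N)) mxE sum6 !mxE.
move: k; apply: ord6_ind => /=; rewrite ?mxE /=; ring.
Qed.

Lemma sact5 (v : 'cV[int]_6) k : (simple_refl (inord 5) *m v) k ord0 =
  if val k == 5%N then v o4 ord0 - v o5 ord0 else v k ord0.
Proof.
rewrite (inordE (isT : (5 < 6)%N)) mxE sum6 !mxE.
move: k; apply: ord6_ind => /=; rewrite ?mxE /=; ring.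
Qed.

Definition wv (z : 'cV[int]_6) (k : nat) : int :=
  match k with
  | 0 => - z o2 ord0 + z o3 ord0
  | 1 => z o1 ord0
  | 2 => z o0 ord0 - z o2 ord0 + z o3 ord0
  | 3 => z o3 ord0
  | 4 => z o3 ord0 - z o5 ord0
  | _ => z o4 ord0 - z o5 ord0 end.

Lemma wact z k : (wE6 *m z) k ord0 = wv z k.
Proof.
move: k; apply: ord6_ind;
rewrite /wE6 -!mulmxA !sact0 /= !sact2 /= !sact4 /= !sact5 /=; ring.
Qed.

Lemma Mact (q : nat) z k : (qw_minus_id q *m z) k ord0 = q%:Z * wv z k - z k ord0.
Proof.
by rewrite /qw_minus_id mulmxBl -scalemxAl mul1mx -wact !mxE.
Qed.

Lemma colP' (x y : 'cV[int]_6) : x = y <-> forall k, x k ord0 = y k ord0.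
Proof.
split=> [-> //|h]; apply/matrixP => i j; by rewrite (ord1 j).
Qed.

Lemma lincomb (c A B C D : int) : A = B -> C - D = c * (A - B) -> C = D.
Proof. by move=> -> e; apply/eqP; rewrite -subr_eq0 e subrr mulr0. Qed.

Lemma lincomb2 (c1 c2 A1 B1 A2 B2 C D : int) : A1 = B1 -> A2 = B2 ->
  C - D = c1 * (A1 - B1) + c2 * (A2 - B2) -> C = D.
Proof. by move=> -> -> e; apply/eqP; rewrite -subr_eq0 e !subrr !mulr0 addr0. Qed.

Definition mkv (a0 a1 a2 a3 a4 a5 : int) : 'cV[int]_6 :=
  \col_(k < 6) nth 0 [:: a0; a1; a2; a3; a4; a5] k.

Definition uu (Q : int) (x : 'cV[int]_6) := Q * x o0 ord0 + x o2 ord0.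
Definition vv (Q : int) (x : 'cV[int]_6) := Q * x o4 ord0 + x o5 ord0.
Definition F1 (Q : int) x := - (Q + 1) * uu Q x + vv Q x.
Definition F2 (Q : int) x := (Q - 1) * uu Q x + x o3 ord0.
Definition DD (Q : int) := Q ^+ 2 + Q + 1.

Lemma core (q : nat) (x : 'cV[int]_6) :
  (exists z, x = qw_minus_id q *m z) <->
  [/\ (q%:Z - 1 %| x o1 ord0)%Z, (DD q %| F1 q x)%Z & ((q%:Z - 1) * DD q %| F2 q x)%Z].
Proof.
set Q := q%:Z; split.
- case=> z /colP' hx.
  have ex k : x k ord0 = Q * wv z k - z k ord0 by rewrite hx Mact.
  rewrite /F1 /F2 /uu /vv !ex /=.
  split; apply/dvdzP.
  + by exists (z o1 ord0); ring.
  + by exists ((Q + 1) * z o2 ord0 - Q * z o3 ord0 - z o5 ord0); rewrite /DD; ring.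
  + by exists (z o3 ord0 - z o2 ord0); rewrite /DD; ring.
- case=> /dvdzP[a ha] /dvdzP[n hn] /dvdzP[m hm].
  have e3 : x o3 ord0 = m * ((Q - 1) * DD Q) - (Q - 1) * uu Q x.
    by apply: (lincomb (c:=1) hm); rewrite /F2; ring.
  have e5 : x o5 ord0 = n * DD Q + (Q + 1) * uu Q x - Q * x o4 ord0.
    by apply: (lincomb (c:=1) hn); rewrite /F1 /vv; ring.
  pose b := m * DD Q - uu Q x.
  pose p := n + (Q + 1) * m - b.
  exists (mkv (Q * (m - b) - (x o0 ord0 - Q * b)) a (- (m - b)) b
              (Q * p - (x o4 ord0 - Q * b)) (- p)).
  apply/colP'; apply: ord6_ind; rewrite Mact /= !mxE /=;
    rewrite ?ha ?e3 ?e5 /p /b /uu /DD; ring.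
Qed.

Definition lin (r : seq int) (x : 'cV[int]_6) : int :=
  nth 0 r 0 * x o0 ord0 + nth 0 r 1 * x o1 ord0 + nth 0 r 2 * x o2 ord0 +
  nth 0 r 3 * x o3 ord0 + nth 0 r 4 * x o4 ord0 + nth 0 r 5 * x o5 ord0.
Arguments lin : simpl never.

Definition Fm (m : nat) (rows : seq (seq int)) : 'M[int]_(m, 6) :=
  \matrix_(k < m, j < 6) nth 0 (nth [::] rows k) j.

Lemma FmE m rows x k : (Fm m rows *m x) k ord0 = lin (nth [::] rows k) x.
Proof. by rewrite mxE sum6 !mxE. Qed.

Lemma coker_via (d : seq nat) (M : 'M[int]_6) (rows : seq (seq int)) :
  (forall y : 'I_(size d) -> int, exists x, forall k : 'I_(size d),
      (lin (nth [::] rows k) x == y k %[mod (nth 0%N d k)%:Z])%Z) ->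
  (forall x, (forall k : 'I_(size d), ((nth 0%N d k)%:Z %| lin (nth [::] rows k) x)%Z)
       <-> exists z, x = M *m z) ->
  coker_iso M d.
Proof.
move=> hs hk; exists (Fm (size d) rows); split.
- move=> y; have [x hx] := hs (fun k => y k ord0); exists x => k; rewrite FmE; exact: hx.
- move=> x; rewrite -hk; split => H k; [rewrite -FmE | rewrite FmE]; exact: H.
Qed.

Lemma ord3_ind (P : 'I_3 -> Prop) : P (@Ordinal 3 0 isT) -> P (@Ordinal 3 1 isT) ->
  P (@Ordinal 3 2 isT) -> forall k, P k.
Proof.
move=> h0 h1 h2 [[|[|[|k]]] p] //; by rewrite (bool_irrelevance p isT).
Qed.

Lemma ord2_ind (P : 'I_2 -> Prop) : P (@Ordinal 2 0 isT) -> P (@Ordinal 2 1 isT) -> forall k, P k.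
Proof.
move=> h0 h1 [[|[|k]] p] //; by rewrite (bool_irrelevance p isT).
Qed.

Lemma c1 (q : nat) : (0 < q)%N -> ((q - 1)%N : int) = q%:Z - 1.
Proof. by move=> h; rewrite subzn. Qed.

Lemma cD (q : nat) : ((q ^ 2 + q + 1)%N : int) = DD q.
Proof. by rewrite /DD !PoszD !expnS expn0 !muln1 PoszM; ring. Qed.

Lemma cN (q : nat) : (0 < q)%N -> ((q ^ 3 - 1)%N : int) = (q%:Z - 1) * DD q.
Proof.
move=> h; rewrite -subzn; last by rewrite expn_gt0 h.
by rewrite /DD !expnS expn0 !muln1 !PoszM; ring.
Qed.

Definition rowA0 : seq int := [:: 0; 1; 0; 0; 0; 0].
Definition rowA1 (Q : int) : seq int := [:: - (Q + 1) * Q; 0; - (Q + 1); 0; Q; 1].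
Definition rowA2 (Q : int) : seq int := [:: (Q - 1) * Q; 0; Q - 1; 1; 0; 0].

Lemma linA0 x : lin rowA0 x = x o1 ord0.
Proof. rewrite /lin /=; ring. Qed.
Lemma linA1 Q x : lin (rowA1 Q) x = F1 Q x.
Proof. rewrite /lin /F1 /uu /vv /=; ring. Qed.
Lemma linA2 Q x : lin (rowA2 Q) x = F2 Q x.
Proof. rewrite /lin /F2 /uu /=; ring. Qed.

Lemma caseA (q : nat) (hq : (0 < q)%N) :
  coker_iso (qw_minus_id q) [:: (q - 1)%N; (q ^ 2 + q + 1)%N; (q ^ 3 - 1)%N].
Proof.
apply: (@coker_via _ _ [:: rowA0; rowA1 q; rowA2 q]).
- move=> y.
  exists (mkv 0 (y (@Ordinal 3 0 isT)) 0 (y (@Ordinal 3 2 isT)) 0 (y (@Ordinal 3 1 isT))).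
  apply: ord3_ind => /=; rewrite ?linA0 ?linA1 ?linA2 /F1 /F2 /uu /vv;
    rewrite !mxE /=; apply/eqP; congr (_ %% _)%Z; ring.
- move=> x; rewrite core; split.
  + move=> H; move: (H (@Ordinal 3 0 isT)) (H (@Ordinal 3 1 isT)) (H (@Ordinal 3 2 isT)).
    by rewrite /= linA0 linA1 linA2 c1 // cD cN.
  + case=> h1 h2 h3 /=; apply: ord3_ind;
      by rewrite /= ?linA0 ?linA1 ?linA2 ?cN ?c1 ?cD.
Qed.

Definition rowB0 (Q al be : int) : seq int :=
  [:: al * (Q - 1) * (- (Q + 1) * Q); be * DD Q; al * (Q - 1) * (- (Q + 1)); 0;
      al * (Q - 1) * Q; al * (Q - 1)].

Lemma linB0 Q al be x : lin (rowB0 Q al be) x = be * DD Q * x o1 ord0 + al * (Q - 1) * F1 Q x.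
Proof. rewrite /lin /F1 /uu /vv /=; ring. Qed.

Lemma caseB (q : nat) (al be : int) (hq : (0 < q)%N)
  (hb : al * (q%:Z - 1) + be * DD q = 1) :
  coker_iso (qw_minus_id q) [:: (q ^ 3 - 1)%N; (q ^ 3 - 1)%N].
Proof.
apply: (@coker_via _ _ [:: rowB0 q al be; rowA2 q]).
- move=> y.
  exists (mkv 0 (y (@Ordinal 2 0 isT)) 0 (y (@Ordinal 2 1 isT)) 0 (y (@Ordinal 2 0 isT))).
  apply: ord2_ind => /=; rewrite ?linB0 ?linA2 /F1 /F2 /uu /vv !mxE /=;
    apply/eqP; congr (_ %% _)%Z.
  + by apply: (lincomb (c:=y (@Ordinal 2 0 isT)) hb); ring.
  + ring.
- move=> x; rewrite core; split.
  + move=> H; move: (H (@Ordinal 2 0 isT)) (H (@Ordinal 2 1 isT)).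
    rewrite /= linB0 linA2 cN // => /dvdzP[g hg] /dvdzP[h hh].
    split; apply/dvdzP.
    * exists (g * DD q + al * (x o1 ord0 - F1 q x)).
      by apply: (lincomb2 (c1:=1) (c2:=- x o1 ord0) hg hb); ring.
    * exists (g * (q%:Z - 1) + be * (F1 q x - x o1 ord0)).
      by apply: (lincomb2 (c1:=1) (c2:=- F1 q x) hg hb); ring.
    * by exists h.
  + case=> h1 h2 h3 /=; apply: ord2_ind; rewrite /= ?linB0 ?linA2 ?cN //.
    move: h1 h2 => /dvdzP[a ha] /dvdzP[n hn]; apply/dvdzP.
    by exists (be * a + al * n); rewrite ha hn; ring.
Qed.

Definition rowC1 (Q K : int) : seq int :=
  let c := - (K + 1) * (Q - 1) in
  [:: c * (- (Q + 1) * Q); 3 * K ^+ 2 + 3 * K + 1; c * (- (Q + 1)); 0; c * Q; c].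

Lemma linC1 Q K x : lin (rowC1 Q K) x =
  (3 * K ^+ 2 + 3 * K + 1) * x o1 ord0 - (K + 1) * (Q - 1) * F1 Q x.
Proof. rewrite /lin /F1 /uu /vv /=; ring. Qed.

Lemma cN3 (q k : nat) : q = (3 * k + 1)%N ->
  (((q ^ 3 - 1) %/ 3)%N : int) = 3 * k%:Z * (3 * k%:Z ^+ 2 + 3 * k%:Z + 1).
Proof.
move=> ->.
have -> : ((3 * k + 1) ^ 3 = 3 * (3 * k * (3 * k ^ 2 + 3 * k + 1)) + 1)%N by ring.
rewrite addnK mulKn // !PoszM !PoszD !PoszM !expnS expn0 !muln1 !PoszM; ring.
Qed.

Lemma caseC (q k : nat) (hq : q = (3 * k + 1)%N) :
  coker_iso (qw_minus_id q) [:: 3%N; ((q ^ 3 - 1) %/ 3)%N; (q ^ 3 - 1)%N].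
Proof.
have q0 : (0 < q)%N by rewrite hq addn1.
have hQ : q%:Z = 3 * k%:Z + 1 by rewrite hq PoszD PoszM.
set K := k%:Z.
apply: (@coker_via _ _ [:: rowA1 q; rowC1 q K; rowA2 q]).
- move=> y.
  set y0 := y (@Ordinal 3 0 isT); set y1 := y (@Ordinal 3 1 isT); set y2 := y (@Ordinal 3 2 isT).
  exists (mkv 0 (y1 + (K + 1) * (q%:Z - 1) * (y0 - y1)) 0 y2 0
              (y1 + (3 * K ^+ 2 + 3 * K + 1) * (y0 - y1))).
  apply: ord3_ind => /=; rewrite ?linA1 ?linC1 ?linA2 /F1 /F2 /uu /vv !mxE /=.
  + rewrite eqz_mod_dvd; apply/dvdzP; exists ((K ^+ 2 + K) * (y0 - y1)); ring.
  + apply/eqP; congr (_ %% _)%Z; rewrite hQ; ring.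
  + apply/eqP; congr (_ %% _)%Z; ring.
- move=> x; rewrite core; split.
  + move=> H; move: (H (@Ordinal 3 0 isT)) (H (@Ordinal 3 1 isT)) (H (@Ordinal 3 2 isT)).
    rewrite /= linA1 linC1 linA2 cN // (cN3 hq) => /dvdzP[t ht] /dvdzP[h hh] h3.
    split => //; apply/dvdzP.
    * exists (h * (3 * K ^+ 2 + 3 * K + 1) + (K + 1) * (F1 q x - x o1 ord0)).
      apply: (lincomb (c:=1) hh); rewrite hQ; ring.
    * exists (t - (K ^+ 2 + K) * (F1 q x - x o1 ord0 + h * (q%:Z - 1))).
      apply: (lincomb2 (c1:=3 * K ^+ 2 + 3 * K + 1) (c2:= - (3 * K ^+ 2 + 3 * K)) ht hh).
      rewrite /DD hQ; ring.
  + case=> h1 h2 h3 /=; apply: ord3_ind; rewrite /= ?linA1 ?linC1 ?linA2 ?cN ?(cN3 hq) //.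
    * move: h2 => /dvdzP[n hn]; apply/dvdzP.
      by exists (n * (3 * K ^+ 2 + 3 * K + 1)); rewrite hn /DD hQ; ring.
    * move: h1 h2 => /dvdzP[a ha] /dvdzP[n hn]; apply/dvdzP.
      by exists (a - 3 * (K + 1) * n); rewrite ha hn /DD hQ; ring.
Qed.

Lemma pp_gt1 q : prime_power q -> (1 < q)%N.
Proof.
case=> p [[|k] [pp k0 ->]] //.
rewrite expnS; apply: leq_trans (prime_gt1 pp) _.
by rewrite leq_pmulr // expn_gt0 prime_gt0.
Qed.

Theorem mainTheorem5 (q : nat) (hq : prime_power q) :
  let N := (q ^ 3 - 1)%N in
  [/\ (q %% 3 != 1)%N -> coker_iso (qw_minus_id q) [:: N; N],
      (q %% 3 == 1)%N -> coker_iso (qw_minus_id q) [:: 3%N; (N %/ 3)%N; N]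
    & coker_iso (qw_minus_id q) [:: (q - 1)%N; (q ^ 2 + q + 1)%N; N]].
Proof.
have q1 := pp_gt1 hq.
have q0 : (0 < q)%N by apply: ltnW.
move=> N; have hd := divn_eq q 3.
have hr : (q %% 3 < 3)%N by rewrite ltn_pmod.
set k := (q %/ 3)%N in hd; set r := (q %% 3)%N in hd hr *.
have hQ : q%:Z = 3 * k%:Z + r%:Z by rewrite {1}hd PoszD PoszM mulrC.
split.
- move=> hr1.
  move: hr hr1 hQ; clear hd; case: r => [|[|[|r]]] // _ _ hQ.
  + apply: (@caseB _ (- (k%:Z * (q%:Z + 2) + 1)) k%:Z q0).
    by rewrite /DD hQ; ring.
  + apply: (@caseB _ (1 + k%:Z * (q%:Z + 2)) (- k%:Z) q0).
    by rewrite /DD hQ; ring.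
- move=> /eqP hr1; apply: (@caseC _ k).
  by rewrite {1}hd hr1 mulnC.
- exact: caseA.
Qed.
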